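(* Let $\mathcal H=\bigcup_{i\ge0}H_i$ be a Level-Prim tree. Then: (a) $\mathcal H$ is a spanning tree of $V$, and along every path in $\mathcal H$ from $r$ to a leaf, the levels of the vertices are non-decreasing; (b) for every $i\ge0$, $\sum_{j\ge i} d(H_j)\le 8\cdot \mathrm{MST}(G/V_{<i})$.
   Context: Let $(V,d)$ be a finite metric with root $r\in V$, and fix $M>0$. Levels: $V_0=\{u: d(r,u)\le M\}$, and for $i\ge1$, $V_i=\{u: 2^{i-1}M<d(r,u)\le 2^iM\}$. A vertex of $V_i$ has level $i$. Write $V_{\le i}=\bigcup_{j\le i}V_j$ and $V_{<i}=V_{\le i-1}$, with $V_{<0}=\emptyset$. Graphs: $G$ is the complete graph on $V$ with edge weights $d$. $G[U]$ is the induced subgraph on $U$. $G/U$ is the multigraph obtained by contracting $U$ to a single vertex, keeping parallel edges; $G/\emptyset=G$. $\mathrm{MST}(\cdot)$ denotes the weight of a minimum spanning tree, and $d(F)$ is the total weight of an edge set $F$. Level-Prim tree: for each $i\ge0$, let $H_i$ be a minimum spanning tree of $G[V_{\le i}]/V_{<i}$, viewed as a set of edges of $G$. Then $\mathcal H=\bigcup_{i\ge0}H_i$. *)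

(* Defs.v *)
From HB Require Import structures.
From mathcomp Require Import all_boot all_order all_algebra.
From Stdlib Require Import ClassicalEpsilon.
Set Implicit Arguments. Unset Strict Implicit. Unset Printing Implicit Defensive.
Import Order.TTheory GRing.Theory Num.Theory.
Local Open Scope ring_scope.

Definition is_metric (R : numDomainType) (V : finType) (d : V -> V -> R) : Prop :=
  [/\ forall x, d x x = 0,
      forall x y, d x y = 0 -> x = y,
      forall x y, d x y = d y x,
      forall x y, 0 <= d x y &
      forall x y z, d x z <= d x y + d y z].

Definition in_level (R : numDomainType) (V : finType) (d : V -> V -> R)
    (r : V) (M : R) (i : nat) (u : V) : bool :=
  if i is i'.+1 then (2%:R ^+ i' * M < d r u) && (d r u <= 2%:R ^+ i * M)
  else d r u <= M.

Definition V_le (R : numDomainType) (V : finType) (d : V -> V -> R) r M (i : nat)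
  : {set V} := [set u | [exists j : 'I_i.+1, in_level d r M j u]].
Definition V_lt (R : numDomainType) (V : finType) (d : V -> V -> R) r M (i : nat)
  : {set V} := [set u | [exists j : 'I_i, in_level d r M j u]].

(* Edges of the complete graph G: 2-element subsets of V. *)
Definition is_edge (V : finType) (e : {set V}) : bool := #|e| == 2%N.

Definition edge_w (R : numDomainType) (V : finType) (d : V -> V -> R) (e : {set V}) : R :=
  match [pick x in e] with
  | Some x => match [pick y in e :\ x] with Some y => d x y | None => 0 end
  | None => 0
  end.

Definition wF (R : numDomainType) (V : finType) (d : V -> V -> R)
    (F : {set {set V}}) : R := \sum_(e in F) edge_w d e.

(* Adjacency in the multigraph (V, F) restricted to W, with U contracted to
   a single vertex: x, y are adjacent if {x,y} in F, or if both lie in U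
   (i.e. they are the same vertex of the contracted graph). *)
Definition crel (V : finType) (W U : {set V}) (F : {set {set V}}) : rel V :=
  fun x y => [&& x \in W, y \in W & ([set x; y] \in F) || ((x \in U) && (y \in U))].

(* F (a set of edges of G) is a spanning tree of G[W]/U:
   edges of G[W]; connected; acyclic (no edge -- including loops, i.e. edges
   inside U -- lies on a cycle of the contracted multigraph). *)
Definition is_st (V : finType) (W U : {set V}) (F : {set {set V}}) : Prop :=
  [/\ forall e, e \in F -> is_edge e && (e \subset W),
      forall x y, x \in W -> y \in W -> connect (crel W U F) x y &
      forall e x y, e \in F -> e = [set x; y] -> ~~ connect (crel W U (F :\ e)) x y].

Definition is_mst (R : numDomainType) (V : finType) (d : V -> V -> R)
    (W U : {set V}) (F : {set {set V}}) : Prop :=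
  is_st W U F /\ forall T, is_st W U T -> wF d F <= wF d T.

Definition pbool (P : Prop) : bool := if excluded_middle_informative P then true else false.

Definition Hunion (V : finType) (H : nat -> {set {set V}}) : {set {set V}} :=
  [set e | pbool (exists i, e \in H i)].

Definition is_leaf (V : finType) (F : {set {set V}}) (x : V) : bool :=
  #|[set e in F | x \in e]| == 1%N.

Definition levels_nondecr (R : numDomainType) (V : finType) (d : V -> V -> R)
    (r : V) (M : R) (s : seq V) : Prop :=
  forall k : nat, (k.+1 < size s)%N ->
    forall i j : nat, in_level d r M i (nth r s k) -> in_level d r M j (nth r s k.+1) ->
      (i <= j)%N.

(* Main.v *)
Require Import Defs.
From HB Require Import structures.
From mathcomp Require Import all_boot all_order all_algebra ssrAC.
From Stdlib Require Import Classical ClassicalEpsilon.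
Import Order.TTheory GRing.Theory Num.Theory.
Set Implicit Arguments. Unset Strict Implicit. Unset Printing Implicit Defensive.
Local Open Scope ring_scope.


Section Main.
Variables (R : archiRealFieldType) (V : finType) (d : V -> V -> R) (r : V) (M : R).
Hypothesis hmet : is_metric d.
Hypothesis hM : 0 < M.

Lemma d0 x : d x x = 0. Proof. by case: hmet. Qed.
Lemma dsym x y : d x y = d y x. Proof. by case: hmet. Qed.
Lemma dge0 x y : 0 <= d x y. Proof. by case: hmet. Qed.
Lemma dtri x y z : d x z <= d x y + d y z. Proof. by case: hmet. Qed.

Definition P2 (j : nat) : R := 2%:R ^+ j * M.

Lemma P2_mono i j : (i <= j)%N -> P2 i <= P2 j.
Proof.
move=> ij; rewrite /P2 ler_pM2r //.
by rewrite (ler_eXn2l (x:=2%:R)) // ltr1n.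
Qed.

Lemma P2_ge0 j : 0 <= P2 j.
Proof. by rewrite /P2 mulr_ge0 ?exprn_ge0 ?ler0n // ltW. Qed.

Lemma P2S j : P2 j.+1 = P2 j + P2 j.
Proof. by rewrite /P2 exprS -mulrA mulr_natl mulr2n. Qed.

Lemma lvl_ex x : exists n, in_level d r M n x.
Proof.
have h0 : 0 <= d r x / M by rewrite divr_ge0 ?dge0 // ltW.
have := archi_boundP h0; set n := Num.Def.archi_bound _ => hn.
have : d r x <= P2 n.
  rewrite /P2 -ler_pdivrMr // ltW // (lt_le_trans hn) //.
  by rewrite -natrX ler_nat ltnW // ltn_expl.
elim: n {hn} => [|n IH] h.
  by exists 0%N; rewrite /in_level /P2 expr0 mul1r in h *.
case: (leP (d r x) (P2 n)) => h1; first exact: IH.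
by exists n.+1; rewrite /in_level -/(P2 n) -/(P2 n.+1) h1 h.
Qed.

Definition lvl x : nat := ex_minn (lvl_ex x).

Lemma lvl_in x : in_level d r M (lvl x) x.
Proof. by rewrite /lvl; case: ex_minnP. Qed.

Lemma in_level_le j x : in_level d r M j x -> d r x <= P2 j.
Proof.
case: j => [|j] /=; first by rewrite /P2 expr0 mul1r.
by case/andP.
Qed.

Lemma in_level_gt i j x : (i < j)%N -> in_level d r M j x -> P2 i < d r x.
Proof.
case: j => [//|j] /= ij /andP[h _].
have ij' : (i <= j)%N by []. exact: le_lt_trans (P2_mono ij') h.
Qed.

Lemma lvl_uniq j x : in_level d r M j x -> j = lvl x.
Proof.
move=> hj; have hl := lvl_in x.
case: (ltngtP j (lvl x)) => // h.
  by have := in_level_gt h hl; rewrite ltNge (in_level_le hj).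
by have := in_level_gt h hj; rewrite ltNge (in_level_le hl).
Qed.

Lemma lvl_le x : d r x <= P2 (lvl x).
Proof. exact: in_level_le (lvl_in x). Qed.

Lemma lvl_le_j j x : (lvl x <= j)%N -> d r x <= P2 j.
Proof. by move=> h; apply: le_trans (lvl_le x) (P2_mono h). Qed.

Lemma lvl_gt j x : (j < lvl x)%N -> P2 j < d r x.
Proof. by move=> h; apply: in_level_gt h (lvl_in x). Qed.

Lemma lvl_r : lvl r = 0%N.
Proof. by apply/esym/lvl_uniq; rewrite /in_level d0 ltW. Qed.

Lemma in_Vle i x : (x \in V_le d r M i) = (lvl x <= i)%N.
Proof.
rewrite inE; apply/existsP/idP => [[j hj]|h].
  by rewrite -(lvl_uniq hj) -ltnS ltn_ord.
by exists (Ordinal (h : (lvl x < i.+1)%N)); exact: lvl_in.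
Qed.

Lemma in_Vlt i x : (x \in V_lt d r M i) = (lvl x < i)%N.
Proof.
rewrite inE; apply/existsP/idP => [[j hj]|h].
  by rewrite -(lvl_uniq hj) ltn_ord.
by exists (Ordinal h); exact: lvl_in.
Qed.


Lemma pboolP (P : Prop) : pbool P <-> P.
Proof. by rewrite /pbool; case: excluded_middle_informative. Qed.

Lemma inHun (H : nat -> {set {set V}}) e : (e \in Hunion H) <-> exists i, e \in H i.
Proof. by rewrite inE; split => [/pboolP|h]; last apply/pboolP. Qed.

Lemma crel_sym (W U : {set V}) (F : {set {set V}}) : symmetric (crel W U F).
Proof.
move=> x y; rewrite /crel [[set y; x]]setUC.
by case: (x \in W); case: (y \in W) => //=; rewrite andbC.
Qed.

Lemma connect_symm (W U : {set V}) (F : {set {set V}}) x y :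
  connect (crel W U F) x y = connect (crel W U F) y x.
Proof. exact: (sym_connect_sym (crel_sym W U F)). Qed.

Lemma path_back (T : eqType) (e : rel T) (P : T -> Prop) x p :
  path e x p -> P (last x p) -> (forall y z, e y z -> P z -> P y) -> P x.
Proof.
elim: p x => [//|y p IH] x /= /andP[exy hp] hl step.
exact: step exy (IH _ hp hl step).
Qed.

Lemma edge_w2 a b : a != b -> edge_w d [set a; b] = d a b.
Proof.
move=> ab; rewrite /edge_w.
case: pickP => [x hx|/(_ a)]; last by rewrite set21.
have [ex|ex] := set2P hx; subst x.
  case: pickP => [y hy|/(_ b)]; last by rewrite !inE eqxx orbT andbT eq_sym ab.
  by move: hy; rewrite !inE => /andP[/negPf ya]; rewrite ya => /eqP ->.
case: pickP => [y hy|/(_ a)]; last by rewrite !inE eqxx andbT ab.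
by move: hy; rewrite !inE => /andP[/negPf ya]; rewrite ya orbF => /eqP ->; rewrite dsym.
Qed.

Lemma edge_w_ge0 e : 0 <= edge_w d e.
Proof.
rewrite /edge_w; case: pickP => [x _|_] //.
by case: pickP => [y _|_] //; exact: dge0.
Qed.

Lemma wF_sub (A B : {set {set V}}) : A \subset B -> wF d A <= wF d B.
Proof.
move=> AB; rewrite /wF [X in _ <= X](big_setID A) /= (setIidPr AB) lerDl.
by apply: sumr_ge0 => e _; exact: edge_w_ge0.
Qed.

Lemma wF_ge0 A : 0 <= wF d A.
Proof. by apply: sumr_ge0 => e _; exact: edge_w_ge0. Qed.

Lemma set2_eq (a b x y : V) : [set a; b] = [set x; y] ->
  a = b \/ (a = x /\ b = y) \/ (a = y /\ b = x).
Proof.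
move=> E.
have ha : a \in [set x; y] by rewrite -E set21.
have hb : b \in [set x; y] by rewrite -E set22.
have hx : x \in [set a; b] by rewrite E set21.
have hy : y \in [set a; b] by rewrite E set22.
case/set2P: ha => ->; case/set2P: hb => ->; try by left.
  by right; left.
by right; right.
Qed.

Lemma splice (W U : {set V}) (F : {set {set V}}) e x y :
  e = [set x; y] -> connect (crel W U (F :\ e)) x y ->
  forall a b, connect (crel W U F) a b -> connect (crel W U (F :\ e)) a b.
Proof.
move=> E cxy a b; apply: connect_sub => {a b} a b /and3P[aW bW h].
case: (boolP ([set a; b] == e)) => [/eqP abe|abe].
  have [->|[[-> ->]|[-> ->]]] := set2_eq (etrans abe E); first exact: connect0.
    exact: cxy.
  by rewrite connect_symm.
apply: connect1; rewrite /crel aW bW /=.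
case/orP: h => [h|->]; last by rewrite orbT.
by rewrite !inE abe h.
Qed.

Lemma st_conn (W U : {set V}) F x y : is_st W U F -> x \in W -> y \in W -> connect (crel W U F) x y.
Proof. by case=> _ h _; exact: h. Qed.

Lemma mst_le (W U : {set V}) H (F : {set {set V}}) : is_mst d W U H ->
  (forall e, e \in F -> is_edge e && (e \subset W)) ->
  (forall x y, x \in W -> y \in W -> connect (crel W U F) x y) ->
  wF d H <= wF d F.
Proof.
move=> [stH minH].
move: {2}#|F| (leqnn #|F|) => n; elim: n F => [|n IH] F hn hE hC.
  apply: minH; split => // e x y eF; move: hn.
  by rewrite leqn0 => /eqP/cards0_eq F0; move: eF; rewrite F0 inE.
case: (classic (forall e x y, e \in F -> e = [set x; y] ->
         ~~ connect (crel W U (F :\ e)) x y)) => hA.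
  by apply: minH; split.
move: hA => /not_all_ex_not[e /not_all_ex_not[x /not_all_ex_not[y hxy]]].
have [eF [E cxy]] : e \in F /\ e = [set x; y] /\ connect (crel W U (F :\ e)) x y.
  by apply: NNPP => hn'; apply: hxy => eF E; apply/negP => c; apply: hn'.
apply: le_trans (wF_sub (subD1set F e)).
apply: IH.
- by rewrite (cardsD1 e F) eF add1n ltnS in hn.
- by move=> f; rewrite !inE => /andP[_]; exact: hE.
- by move=> a b aW bW; apply: splice E cxy _ _ (hC a b aW bW).
Qed.


Lemma crel_T0 (F : {set {set V}}) x y : crel [set: V] set0 F x y = ([set x; y] \in F).
Proof. by rewrite /crel !inE /= orbF. Qed.

Lemma edge_neq (x y : V) : is_edge [set x; y] -> x != y.
Proof. by rewrite /is_edge cards2; case: (x != y). Qed.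

Lemma max_in (s : seq V) x : exists2 y, y \in x :: s & forall z, z \in x :: s -> (lvl z <= lvl y)%N.
Proof.
elim: s x => [|a s IH] x.
  by exists x; rewrite ?inE // => z; rewrite inE => /eqP ->.
have [y ys hy] := IH a.
case: (leqP (lvl x) (lvl y)) => h.
  exists y; first by rewrite inE ys orbT.
  by move=> z; rewrite inE => /orP[/eqP->|]//; exact: hy.
exists x; first by rewrite inE eqxx.
move=> z; rewrite inE => /orP[/eqP->|/hy hz]//.
exact: leq_trans hz (ltnW h).
Qed.

Section HSec.
Variable H : nat -> {set {set V}}.
Hypothesis hH : forall i, is_mst d (V_le d r M i) (V_lt d r M i) (H i).

Definition Hrel : rel V := fun x y => [set x; y] \in Hunion H.

Lemma H_edge i e : e \in H i -> is_edge e && (e \subset V_le d r M i).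
Proof. by case: (hH i) => [[h _ _] _]; exact: h. Qed.

Lemma H_acyc i e x y : e \in H i -> e = [set x; y] ->
  ~~ connect (crel (V_le d r M i) (V_lt d r M i) (H i :\ e)) x y.
Proof. by case: (hH i) => [[_ _ h] _]; exact: h. Qed.

Lemma H_lvl i x y : [set x; y] \in H i ->
  [/\ x != y, (lvl x <= i)%N, (lvl y <= i)%N & (lvl x == i) || (lvl y == i)].
Proof.
move=> hin; have /andP[he hs] := H_edge hin.
have hx : (lvl x <= i)%N by rewrite -in_Vle (subsetP hs) // set21.
have hy : (lvl y <= i)%N by rewrite -in_Vle (subsetP hs) // set22.
split => //; first exact: edge_neq.
apply/negPn/negP => /norP[nx ny].
have hx' : x \in V_lt d r M i by rewrite in_Vlt ltn_neqAle nx.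
have hy' : y \in V_lt d r M i by rewrite in_Vlt ltn_neqAle ny.
move: (H_acyc hin (erefl _)) => /negP; apply; apply: connect1.
by rewrite /crel hx' hy' !in_Vle hx hy orbT.
Qed.

Lemma Hrel_lvl x y : Hrel x y -> exists l, [/\ [set x; y] \in H l, x != y,
  (lvl x <= l)%N, (lvl y <= l)%N & (lvl x == l) || (lvl y == l)].
Proof.
by move=> /inHun[l hl]; exists l; have [? ? ? ?] := H_lvl hl; split.
Qed.

Lemma map_down L (f : {set V}) b s :
  path (fun u v => Hrel u v && ([set u; v] != f)) b s ->
  all (fun x => lvl x <= L)%N (b :: s) ->
  connect (crel (V_le d r M L) (V_lt d r M L) (H L :\ f)) b (last b s).
Proof.
elim: s b => [|c s IH] b /=; first by move=> _ _; exact: connect0.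
move=> /andP[/andP[hbc hnf] hp] /and3P[hb hc hall].
apply: connect_trans (IH c hp _); last by rewrite /= hc.
have [l [hl _ hbl hcl hor]] := Hrel_lvl hbc.
have lL : (l <= L)%N by case/orP: hor => /eqP <-.
apply: connect1; rewrite /crel !in_Vle hb hc /= !in_Vlt.
case: (ltngtP l L) lL => // [lL|<-] _.
  by rewrite (leq_ltn_trans hbl lL) (leq_ltn_trans hcl lL) orbT.
by rewrite !inE hnf hl.
Qed.

Lemma split_first (T : eqType) (P : pred T) s : has P s ->
  exists s1 b s2, [/\ s = s1 ++ b :: s2, P b & ~~ has P s1].
Proof.
elim: s => [//|x s IH] /=; case: (boolP (P x)) => hx /= h.
  by exists [::], x, s.
have [s1 [b [s2 [-> hb hs1]]]] := IH h.
by exists (x :: s1), b, s2; rewrite /= (negbTE hx).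
Qed.

Lemma stay L u p : path Hrel u p -> uniq (u :: p) ->
  (lvl u < L)%N -> (lvl (last u p) < L)%N -> all (fun x => lvl x < L)%N (u :: p).
Proof.
move=> hp hu hu0 hlast; apply/allP => z zin; rewrite ltnNge; apply/negP => Lz.
have [y yin hy] := max_in p u.
set L' := lvl y.
have LL' : (L <= L')%N := leq_trans Lz (hy z zin).
have hhas : has (fun x => L' <= lvl x)%N (u :: p) by apply/hasP; exists y.
have [s1 [b [s2 [E hb hs1]]]] := split_first hhas.
case: s1 E hs1 => [|a0 s1] /= E hs1.
  by case: E => eub _; move: hb; rewrite -eub leqNgt (leq_trans hu0 LL').
case: E => ea0 ep; subst a0 p.
set a := last u s1.
move: hp; rewrite cat_path /= => /and3P[_ hab hp2].
have hbL : lvl b = L'.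
  by apply/eqP; rewrite eqn_leq hb hy // inE mem_cat inE eqxx !orbT.
have ha : (lvl a < L')%N.
  rewrite ltnNge; apply/negP => h; move/negP: hs1; apply.
  have : has (fun x => L' <= lvl x)%N (u :: s1) by apply/hasP; exists a; [exact: mem_last|].
  by [].
have [l [hl _ hal hbl hor]] := Hrel_lvl hab.
have lL' : l = L'.
  apply/eqP; rewrite eqn_leq; apply/andP; split; last by rewrite -hbL.
  by case/orP: hor => /eqP <-; rewrite ?hbL // ltnW.
subst l.
have anotin : a \notin b :: s2.
  move: hu; rewrite -cat_cons cat_uniq => /and3P[_ /hasPn hdis _].
  apply/negP => ain; move/negP: (hdis _ ain); apply; exact: mem_last.
have hp2' : path (fun u v => Hrel u v && ([set u; v] != [set a; b])) b s2.
  apply: (sub_in_path (P := [predC [set a]])) hp2.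
    move=> x' y' hx' hy' hxy; rewrite /= hxy /=; apply/negP => /eqP E.
    have : a \in [set x'; y'] by rewrite E set21.
    by case/set2P => ex; subst; rewrite !inE eqxx in hx' hy'.
  apply/allP => x' x'in; rewrite !inE; apply/negP => /eqP ex'.
  by move: anotin; rewrite -ex' x'in.
have hall : all (fun x => lvl x <= L')%N (b :: s2).
  apply/allP => x' x'in; apply: hy.
  by rewrite -cat_cons mem_cat x'in orbT.
have c1 := map_down hp2' hall.
move: hlast; rewrite last_cat /= => hlast.
have c2 : connect (crel (V_le d r M L') (V_lt d r M L') (H L' :\ [set a; b])) b a.
  apply: connect_trans c1 (connect1 _).
  by rewrite /crel !in_Vle !in_Vlt (ltnW ha) (leq_trans hlast LL') ha orbT
       (ltnW (leq_trans hlast LL')).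
by have := H_acyc (x:=b) (y:=a) hl (setUC _ _); rewrite c2.
Qed.


Lemma Hun_edges e : e \in Hunion H -> is_edge e && (e \subset [set: V]).
Proof. by move=> /inHun[i /H_edge/andP[-> _]]; rewrite subsetT. Qed.

Lemma conn_r j x : (lvl x <= j)%N -> connect (crel [set: V] set0 (Hunion H)) x r.
Proof.
elim: j x => [|j IH] x hx.
  have : connect (crel (V_le d r M 0) (V_lt d r M 0) (H 0)) x r.
    by apply: st_conn (proj1 (hH 0)) _ _; rewrite in_Vle ?lvl_r.
  case/connectP => p hp ->.
  apply: (path_back (P := fun y => connect (crel [set: V] set0 (Hunion H)) y (last x p))) hp _ _ => //.
  move=> y z /and3P[_ _ /orP[hyz|]]; last by rewrite in_Vlt.
  move=> c; apply: connect_trans c; apply: connect1; rewrite crel_T0.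
  by apply/inHun; exists 0%N.
have : connect (crel (V_le d r M j.+1) (V_lt d r M j.+1) (H j.+1)) x r.
  by apply: st_conn (proj1 (hH j.+1)) _ _; rewrite in_Vle ?lvl_r.
case/connectP => p hp E; rewrite E.
apply: (path_back (P := fun y => connect (crel [set: V] set0 (Hunion H)) y (last x p))) hp _ _ => //.
move=> y z /and3P[_ _ /orP[hyz|/andP[hy _]]] c.
  apply: connect_trans c; apply: connect1; rewrite crel_T0.
  by apply/inHun; exists j.+1.
by rewrite -E; apply: IH; rewrite in_Vlt in hy.
Qed.

Lemma Hun_conn x y : connect (crel [set: V] set0 (Hunion H)) x y.
Proof.
apply: connect_trans (conn_r (leqnn _)) _.
by rewrite connect_symm; exact: (conn_r (leqnn _)).
Qed.

Lemma Hun_acyc e x y : e \in Hunion H -> e = [set x; y] ->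
  ~~ connect (crel [set: V] set0 (Hunion H :\ e)) x y.
Proof.
move=> /inHun[l hl] E; apply/negP => /connectP[p hp ey].
have hl' : [set x; y] \in H l by rewrite -E.
have [xy hxl hyl _] := H_lvl hl'.
case: (shortenP hp) ey => p' hp' hu _ ey.
have hpH : path Hrel x p'.
  by apply: sub_path hp' => u v; rewrite crel_T0 /Hrel !inE => /andP[].
have hyl' : (lvl (last x p') < l.+1)%N by rewrite -ey.
have hall := stay hpH hu (hxl : (lvl x < l.+1)%N) hyl'.
have hp2 : path (fun u v => Hrel u v && ([set u; v] != e)) x p'.
  by apply: sub_path hp' => u v; rewrite crel_T0 /Hrel !inE => /andP[-> ->].
have := map_down hp2 hall; rewrite -ey.
by have := H_acyc hl E => /negPf ->.
Qed.

Lemma Hun_st : is_st [set: V] set0 (Hunion H).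
Proof.
split; [exact: Hun_edges| by move=> x y _ _; exact: Hun_conn|exact: Hun_acyc].
Qed.

Lemma Hun_mono p : path Hrel r p -> uniq (r :: p) -> levels_nondecr d r M (r :: p).
Proof.
move=> hp hu k hk i j hi hj.
rewrite (lvl_uniq hi) (lvl_uniq hj).
have hk' : (k < size p)%N by [].
set q := take k.+1 p.
have hq : path Hrel r q by exact: take_path.
have hqu : uniq (r :: q) by rewrite -/(take k.+2 (r :: p)) take_uniq.
have hlast : last r q = nth r (r :: p) k.+1.
  by rewrite (last_nth r) /q (size_takel hk') -/(take k.+2 (r :: p)) nth_take.
have := stay (L := (lvl (nth r (r :: p) k.+1)).+1) hq hqu.
rewrite lvl_r hlast ltnS => /(_ isT (leqnn _)) /allP; apply.
have -> : nth r (r :: p) k = nth r (r :: q) k.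
  by rewrite -/(take k.+2 (r :: p)) nth_take.
by apply: mem_nth; rewrite /= (size_takel hk') ltnS ltnW.
Qed.

End HSec.

End Main.


Section Tours.
Variables (R : archiRealFieldType) (V : finType) (d : V -> V -> R).
Hypothesis hmet : is_metric d.

Fixpoint pc (x : V) (s : seq V) : R :=
  if s is y :: s' then d x y + pc y s' else 0.

Definition cyc (s : seq V) : R := if s is x :: _ then pc (last x s) s else 0.

Lemma pc_cat x s1 s2 : pc x (s1 ++ s2) = pc x s1 + pc (last x s1) s2.
Proof. by elim: s1 x => [|y s1 IH] x /=; rewrite ?add0r // IH addrA. Qed.

Lemma pc_ge0 x s : 0 <= pc x s.
Proof. by elim: s x => [|y s IH] x //=; rewrite addr_ge0 ?(dge0 hmet). Qed.

Lemma pc_tri x y t : pc x t <= d x y + pc y t.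
Proof.
case: t => [|h t] /=; first by rewrite addr0 (dge0 hmet).
by rewrite addrA lerD2r (dtri hmet).
Qed.

Lemma pc_filter (P : pred V) x s t : pc x (filter P s ++ t) <= pc x (s ++ t).
Proof.
elim: s x => [|h s IH] x /=; first by [].
case: (P h) => /=; first by rewrite lerD2l.
exact: le_trans (IH x) (pc_tri _ _ _).
Qed.

Lemma cyc_rot s1 s2 : cyc (s1 ++ s2) = cyc (s2 ++ s1).
Proof.
case: s1 => [|a s1]; first by rewrite cats0.
case: s2 => [|b s2]; first by rewrite cats0.
rewrite /cyc /= !last_cat /= !pc_cat /=.
set x1 := d _ a; set x2 := d _ b; set y1 := pc a s1; set y2 := pc b s2.
by rewrite addrA [RHS]addrA addrC.
Qed.

Lemma cyc_ge0 s : 0 <= cyc s.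
Proof. by case: s => [|x s] //; exact: pc_ge0. Qed.

Lemma cyc_cons z t : cyc (z :: t) = pc z (rcons t z).
Proof.
by rewrite /cyc /= -cats1 pc_cat /= addr0 addrC.
Qed.

Lemma cyc_splice a A b B :
  cyc ((a :: A) ++ (b :: B)) <= cyc (a :: A) + cyc (b :: B) + (d a b + d a b).
Proof.
rewrite /cyc /= last_cat /= pc_cat /=.
set la := last a A; set lb := last b B.
set pA := pc a A; set pB := pc b B.
have h1 : d lb a <= d lb b + d b a := dtri hmet _ _ _.
have h2 : d la b <= d la a + d a b := dtri hmet _ _ _.
rewrite (dsym hmet b a) in h1.
have E : d la a + pA + (d lb b + pB) + (d a b + d a b) =
    (d lb b + d a b) + (pA + ((d la a + d a b) + pB)).
  by rewrite !addrA [LHS](ACl (3*5*2*1*6*4)).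
rewrite E.
exact: (lerD h1 (lerD (lexx pA) (lerD h2 (lexx pB)))).
Qed.


Definition same_tour (ts : seq (seq V)) x y := has (fun t => (x \in t) && (y \in t)) ts.
Definition tcover (ts : seq (seq V)) := forall x, count (fun t => x \in t) ts = 1%N.

Lemma tour_uniq (ts : seq (seq V)) x (t1 t2 : seq V) : count (fun t => x \in t) ts = 1%N ->
  t1 \in ts -> t2 \in ts -> x \in t1 -> x \in t2 -> t1 = t2.
Proof.
elim: ts => [//|t ts IH] /=.
have c0 : forall t', t' \in ts -> x \in t' -> (0 < count (fun t => x \in t) ts)%N.
  by move=> t' h1 h2; rewrite -has_count; apply/hasP; exists t'.
case: (boolP (x \in t)) => xt /=.
  move=> /eqP; rewrite add1n eqSS => /eqP c1.
  rewrite !inE => /orP[/eqP->|h1] /orP[/eqP->|h2] x1 x2 //.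
  - by have := c0 _ h2 x2; rewrite c1.
  - by have := c0 _ h1 x1; rewrite c1.
  - by have := c0 _ h1 x1; rewrite c1.
rewrite add0n => c1; rewrite !inE => /orP[/eqP->|h1] /orP[/eqP->|h2] x1 x2.
- by [].
- by rewrite x1 in xt.
- by rewrite x2 in xt.
- exact: IH.
Qed.

Lemma mem_rem_neq (T : eqType) (x y : T) s : y \in s -> y != x -> y \in rem x s.
Proof.
elim: s => [//|z s IH]; rewrite inE /= => /orP[/eqP ->|ys] yx.
  by rewrite /= (negbTE yx) inE eqxx.
by case: ifP => _; rewrite ?inE ?IH ?ys ?orbT.
Qed.

Lemma split_mem (T : eqType) (x : T) s : x \in s -> exists s1 s2, s = s1 ++ x :: s2.
Proof. by case/splitPr => s1 s2; exists s1, s2. Qed.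

Lemma cover_has (ts : seq (seq V)) x : tcover ts -> exists2 t, t \in ts & x \in t.
Proof.
move=> /(_ x) c; have : has (fun t => x \in t) ts by rewrite has_count c.
by case/hasP => t h1 h2; exists t.
Qed.

Lemma tours (es : seq (V * V)) : exists ts : seq (seq V),
  [/\ tcover ts, forall p, p \in es -> same_tour ts p.1 p.2 &
      \sum_(t <- ts) cyc t <= 2%:R * \sum_(p <- es) d p.1 p.2].
Proof.
elim: es => [|[a b] es [ts [cov same cost]]].
  exists [seq [:: x] | x <- enum V]; split => //.
  - move=> x; rewrite count_map.
    have -> : count (preim (fun x0 => [:: x0]) (fun t => x \in t)) (enum V) = count_mem x (enum V).
      by apply: eq_count => y /=; rewrite inE eq_sym.
    by rewrite count_uniq_mem ?enum_uniq // mem_enum.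
  - rewrite big_map big_nil mulr0 big1 // => x _.
    by rewrite /cyc /= (d0 hmet) addr0.
rewrite big_cons.
have hcost : 2%:R * \sum_(p <- es) d p.1 p.2 <= 2%:R * (d (a, b).1 (a, b).2 + \sum_(p <- es) d p.1 p.2).
  by rewrite ler_wpM2l ?ler0n // lerDr (dge0 hmet).
case: (boolP (same_tour ts a b)) => hs.
  exists ts; split => //; last exact: le_trans cost hcost.
  by move=> p; rewrite inE => /orP[/eqP->|/same].
have [ta tain ata] := cover_has a cov.
have [tb tbin btb] := cover_has b cov.
have tab : tb != ta.
  apply/negP => /eqP E; move/negP: hs; apply; apply/hasP; exists ta => //.
  by rewrite ata -E btb.
have [s1 [s2 eta]] := split_mem ata.
have [u1 [u2 etb]] := split_mem btb.
set rest := rem tb (rem ta ts).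
have hperm : perm_eq ts (ta :: tb :: rest).
  apply: perm_trans (perm_to_rem tain) _; rewrite perm_cons.
  by apply: perm_to_rem; exact: mem_rem_neq.
set A := a :: s2 ++ s1; set B := b :: u2 ++ u1.
have memA x : (x \in A) = (x \in ta) by rewrite eta /A -cat_cons !mem_cat orbC.
have memB x : (x \in B) = (x \in tb) by rewrite etb /B -cat_cons !mem_cat orbC.
have cA : cyc A = cyc ta by rewrite /A -cat_cons cyc_rot eta.
have cB : cyc B = cyc tb by rewrite /B -cat_cons cyc_rot etb.
have aA : a \in A by rewrite memA.
have bB : b \in B by rewrite memB.
have [A' eA] : exists A', A = a :: A' by exists (s2 ++ s1).
have [B' eB] : exists B', B = b :: B' by exists (u2 ++ u1).
clearbody A B.
exists ((A ++ B) :: rest); split.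
- move=> x; have := cov x; rewrite ((permP hperm) (fun t => x \in t)) /= mem_cat memA memB.
  by case: (x \in ta); case: (x \in tb).
- move=> p; rewrite inE => /orP[/eqP->|/same].
    by apply/hasP; exists (A ++ B); rewrite ?inE ?eqxx //= !mem_cat aA bB orbT.
  rewrite /same_tour (perm_has _ hperm) /= => /orP[h|/orP[h|h]]; apply/orP.
  + by left; rewrite !mem_cat !memA !memB; case/andP: h => -> ->.
  + by left; rewrite !mem_cat !memA !memB; case/andP: h => -> ->; rewrite !orbT.
  + by right.
- rewrite (perm_big _ hperm) !big_cons /= in cost.
  apply: (@le_trans _ _ (cyc ta + (cyc tb + \sum_(j <- rest) cyc j) + (d a b + d a b))).
    rewrite big_cons /=.
    have -> : cyc ta + (cyc tb + \sum_(j <- rest) cyc j) + (d a b + d a b) =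
       cyc ta + cyc tb + (d a b + d a b) + \sum_(j <- rest) cyc j.
      by rewrite !addrA [LHS](ACl (1*2*4*5*3)).
    by rewrite lerD2r -cA -cB eA eB cyc_splice.
  by rewrite /= mulrDr mulr_natl mulr2n addrC lerD2l.
Qed.

End Tours.


Section Fj.
Variables (R : archiRealFieldType) (V : finType) (d : V -> V -> R) (r : V) (M : R).
Hypothesis hmet : is_metric d.
Hypothesis hM : 0 < M.

Local Notation lv := (lvl r hmet hM).
Local Notation pc := (pc d).
Local Notation cyc := (cyc d).

Definition Fl (l : seq (V * V)) : {set {set V}} :=
  [set e | is_edge e && has (fun p => e == [set p.1; p.2]) l].

Lemma edge_w_le (a b : V) : edge_w d [set a; b] <= d a b.
Proof.
case: (eqVneq a b) => [<-|ab]; last by rewrite (edge_w2 hmet ab).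
rewrite /edge_w setUid; case: pickP => [x hx|_]; last exact: (dge0 hmet a a).
case: pickP => [y|_]; last exact: (dge0 hmet a a).
by rewrite !inE => /andP[/negPf yx]; move: hx yx; rewrite inE => /eqP -> ->.
Qed.

Lemma wF_U1 (e : {set V}) (A : {set {set V}}) : wF d (e |: A) <= edge_w d e + wF d A.
Proof.
case: (boolP (e \in A)) => eA.
  by rewrite (setUidPr _) ?sub1set // lerDr edge_w_ge0.
by rewrite /wF big_setU1.
Qed.

Lemma wF_Fl l : wF d (Fl l) <= \sum_(p <- l) d p.1 p.2.
Proof.
elim: l => [|p l IH].
  rewrite big_nil /wF big_pred0 // => e; rewrite inE /=.
  by rewrite andbF.
rewrite big_cons.
apply: le_trans (wF_sub hmet (_ : Fl (p :: l) \subset [set p.1; p.2] |: Fl l)) _.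
  apply/subsetP => e; rewrite !inE /= => /andP[he /orP[/eqP ->|h]].
    by rewrite eqxx.
  by rewrite he h orbT.
apply: le_trans (wF_U1 _ _) _.
by apply: lerD; [exact: edge_w_le|exact: IH].
Qed.

Definition pcl (s : seq V) : R := if s is x :: s' then pc x s' else 0.

Lemma sum_zip s : \sum_(p <- zip s (behead s)) d p.1 p.2 = pcl s.
Proof.
case: s => [|x s]; first by rewrite big_nil.
elim: s x => [|y s IH] x; first by rewrite big_nil.
by rewrite /= big_cons /= IH.
Qed.

Lemma pcl_le_pc x s : pcl s <= pc x s.
Proof. by case: s => [|y s] /=; [exact: lexx|rewrite lerDr dge0]. Qed.

Lemma pcl_filter (P : pred V) s : pcl (filter P s) <= pcl s.
Proof.
elim: s => [//|x s IH] /=; case: (P x) => /=.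
  by have := pc_filter hmet P x s [::]; rewrite !cats0.
exact: le_trans IH (pcl_le_pc _ _).
Qed.

Lemma pcl_cyc s : pcl s <= cyc s.
Proof. by case: s => [|x s] //=; rewrite lerDr dge0. Qed.

Variable j : nat.
Definition Kj x := (lv x <= j)%N.
Definition Pz x := (j.+2 <= lv x)%N.

Definition tp (t : seq V) : seq V :=
  if has Pz t then drop (find Pz t).+1 t ++ take (find Pz t) t else t.
Definition fs t := filter Kj (tp t).
Definition prs t : seq (V * V) :=
  zip (fs t) (behead (fs t)) ++
  (if has Pz t && (fs t != [::]) then [:: (last r (fs t), r)] else [::]).

Lemma tp_split t : has Pz t -> exists2 z, Pz z & cyc t = cyc (z :: tp t) /\ t =i z :: tp t.
Proof.
move=> h; rewrite /tp h; set i := find Pz t.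
have hi : (i < size t)%N by rewrite -has_find.
exists (nth r t i); first exact: nth_find.
have E : t = take i t ++ nth r t i :: drop i.+1 t by rewrite -drop_nth // cat_take_drop.
split.
  by rewrite {1}E cyc_rot.
move=> x; rewrite {1}E !mem_cat !inE mem_cat.
by case: (x \in take i t); case: (x == nth r t i); rewrite ?orbT ?orbF.
Qed.

Lemma far_r w z : Kj w -> Pz z -> d w r <= d w z.
Proof.
move=> hw hz.
have h1 : d r w <= P2 M j := lvl_le_j hw.
have h2 : P2 M j.+1 < d r z := lvl_gt hz.
rewrite P2S in h2.
have h3 := dtri hmet r w z.
rewrite (dsym hmet w r).
have : d r w + d r w < d r w + d w z.
  apply: le_lt_trans (lerD h1 h1) _.
  exact: lt_le_trans h2 h3.
by rewrite ltrD2l => /ltW.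
Qed.

Lemma prs_cost t : \sum_(p <- prs t) d p.1 p.2 <= cyc t.
Proof.
rewrite /prs big_cat /= sum_zip.
case: (boolP (has Pz t)) => hz /=; last first.
  rewrite big_nil addr0 /fs /tp (negbTE hz).
  exact: le_trans (pcl_filter _ _) (pcl_cyc _).
have [z pz [-> _]] := tp_split hz.
rewrite cyc_cons -cats1.
have := pc_filter hmet Kj z (tp t) [:: z]; rewrite -/(fs t).
move/(le_trans _); apply.
case E: (fs t) => [|f1 fs'] /=.
  by rewrite big_nil !addr0 (dge0 hmet z z).
have hw : Kj (last f1 fs').
  have : last f1 fs' \in fs t by rewrite E mem_last.
  by rewrite mem_filter => /andP[].
rewrite big_cons big_nil /= pc_cat /= !addr0 addrCA lerD2l.
apply: le_trans (far_r hw pz) _.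
by rewrite ?lerDl ?lerDr (dge0 hmet).
Qed.


Lemma zip_mem (s : seq V) p : p \in zip s (behead s) -> p.1 \in s /\ p.2 \in s.
Proof.
case: s => [//|x s]; elim: s x => [//|y s IH] x.
rewrite /= inE => /orP[/eqP ->|/IH [h1 h2]] /=; first by rewrite !inE !eqxx orbT.
by rewrite !(in_cons x) h1 h2 !orbT.
Qed.

Lemma Kj_r : Kj r.
Proof. by rewrite /Kj lvl_r. Qed.

Lemma prs_K t p : p \in prs t -> Kj p.1 /\ Kj p.2.
Proof.
rewrite /prs mem_cat => /orP[/zip_mem [h1 h2]|].
  by move: h1 h2; rewrite !mem_filter => /andP[-> _] /andP[-> _].
case: ifP => // /andP[_ ne]; rewrite inE => /eqP -> /=; split; last exact: Kj_r.
case E: (fs t) ne => [//|f fs'] _ /=.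
have : last f fs' \in fs t by rewrite E mem_last.
by rewrite mem_filter => /andP[].
Qed.

Lemma Kj_Pz x : Kj x -> ~~ Pz x.
Proof. by rewrite /Kj /Pz -ltnNge => h; apply: leq_ltn_trans h _; rewrite ltnS. Qed.

Lemma term_fs t x : x \in t -> Kj x -> x \in fs t.
Proof.
move=> xt kx; rewrite /fs mem_filter kx /=.
case: (boolP (has Pz t)) => h; last by rewrite /tp (negbTE h).
have [z pz [_ mem]] := tp_split h.
move: xt; rewrite mem inE => /orP[/eqP exz|//].
by move: (Kj_Pz kx); rewrite exz pz.
Qed.

Definition allprs (ts : seq (seq V)) := flatten (map prs ts).
Definition Gj ts := crel (V_le d r M j) (V_lt d r M j) (Fl (allprs ts)).

Lemma adj ts t p : t \in ts -> p \in prs t -> connect (Gj ts) p.1 p.2.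
Proof.
move=> tin pin; have [k1 k2] := prs_K pin; rewrite /Kj in k1 k2.
case: (eqVneq p.1 p.2) => [->|ne]; first exact: connect0.
apply: connect1; rewrite /Gj /crel !(in_Vle r hmet hM) k1 k2 /=.
apply/orP; left; rewrite inE /is_edge cards2 ne /=.
apply/hasP; exists p => //.
by apply/flattenP; exists (prs t) => //; apply: map_f.
Qed.

Lemma list_conn (e : rel V) h s : (forall p, p \in zip (h :: s) s -> connect e p.1 p.2) ->
  forall x, x \in h :: s -> connect e h x.
Proof.
elim: s h => [|h' s IH] h hz x; rewrite ?inE.
  by move=> /eqP ->; exact: connect0.
case/orP => [/eqP ->|xin]; first exact: connect0.
apply: connect_trans (hz (h, h') _) (IH h' _ x xin); first by rewrite inE eqxx.
by move=> p pin; apply: hz; rewrite inE pin orbT.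
Qed.

Lemma fs_conn ts t x y : t \in ts -> x \in fs t -> y \in fs t -> connect (Gj ts) x y.
Proof.
move=> tin; case E: (fs t) => [//|h s] xin yin.
have hz : forall p, p \in zip (h :: s) s -> connect (Gj ts) p.1 p.2.
  by move=> p pin; apply: adj tin _; rewrite /prs E mem_cat pin.
apply: connect_trans (_ : connect _ x h) (list_conn hz yin).
by rewrite /Gj connect_symm; exact: (list_conn hz xin).
Qed.

Lemma pz_conn ts t x : t \in ts -> has Pz t -> x \in t -> Kj x -> connect (Gj ts) x r.
Proof.
move=> tin hz xt kx; have xf := term_fs xt kx.
case E: (fs t) xf => [//|f fs'] xf.
have lf : last f fs' \in fs t by rewrite E mem_last.
have xf' : x \in fs t by rewrite E.
apply: connect_trans (fs_conn tin xf' lf) _.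
have := adj (p := (last f fs', r)) tin; apply.
by rewrite /prs E hz /= mem_cat inE eqxx orbT.
Qed.


Lemma conn_ALL ts y : tcover ts -> Kj y -> connect (Gj ts) y r ->
  forall t, t \in ts -> y \in t -> forall x, x \in t -> Kj x -> connect (Gj ts) x r.
Proof.
move=> cov ky c t tin yt x xt kx.
exact: connect_trans (fs_conn tin (term_fs xt kx) (term_fs yt ky)) c.
Qed.

Definition ep (e : {set V}) : V * V :=
  let u := odflt r [pick x in e] in (u, odflt r [pick y in e :\ u]).

Lemma ep_spec e : is_edge e -> e = [set (ep e).1; (ep e).2] /\ edge_w d e = d (ep e).1 (ep e).2.
Proof.
case/cards2P => [x [y [xy ->]]].
rewrite /ep /edge_w; case: pickP => [u hu|/(_ x)]; last by rewrite set21.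
have [v0 [hv0 v0u]] : exists v, v \in [set x; y] /\ v != u.
  by case/set2P: hu => ->; [exists y; rewrite set22 eq_sym | exists x; rewrite set21].
case: pickP => [v hv|/(_ v0)] /=; last by rewrite in_setD1 v0u hv0.
split; last by [].
move: hu hv; rewrite !inE /= => hu /andP[vu hv].
case/orP: hu => /eqP eu; case/orP: hv => /eqP ev; subst u v.
- by rewrite eqxx in vu.
- by [].
- exact: setUC.
- by rewrite eqxx in vu.
Qed.

Variables (i : nat) (T : {set {set V}}).
Hypothesis hT : is_st [set: V] (V_lt d r M i) T.
Hypothesis hij : (i <= j)%N.

Definition Ej := [set e in T | [exists x in e, (lv x == j) || (lv x == j.+1)]].
Definition es := map ep (enum Ej).

Lemma T_edge e : e \in T -> is_edge e.
Proof. by case: hT => h _ _ /h /andP[]. Qed.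

Lemma wF_Ej : wF d Ej = \sum_(p <- es) d p.1 p.2.
Proof.
rewrite /es big_map /wF -big_enum /=; apply: eq_big_seq => e.
rewrite mem_enum inE => /andP[eT _].
by have [_ ->] := ep_spec (T_edge eT).
Qed.

Lemma Ej_conn ts : tcover ts -> (forall p, p \in es -> same_tour ts p.1 p.2) ->
  forall x, Kj x -> connect (Gj ts) x r.
Proof.
move=> cov same.
pose ALL y := forall t, t \in ts -> y \in t -> forall x, x \in t -> Kj x -> connect (Gj ts) x r.
suff hall : forall y, (lv y <= j.+1)%N -> ALL y.
  move=> x kx; have [t tin xt] := cover_has x cov.
  by apply: (hall x _ t tin xt x xt kx); rewrite (leq_trans kx).
move=> y0; have := st_conn hT (in_setT y0) (in_setT r).
case/connectP => p hp E.
apply: (path_back (P := fun y => (lv y <= j.+1)%N -> ALL y)) hp _ _.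
  rewrite -E => _; apply: conn_ALL cov Kj_r (connect0 _ _).
move=> y z hyz hPz hy.
case: (ltnP (lv y) j) => hyj.
  have ky : Kj y by rewrite /Kj ltnW.
  apply: conn_ALL cov ky _; apply: connect1.
  rewrite /Gj /crel !(in_Vle r hmet hM) !(in_Vlt r hmet hM) lvl_r (ltnW hyj) hyj /=.
  by rewrite (leq_ltn_trans _ hyj) ?orbT.
have yi : y \notin V_lt d r M i by rewrite (in_Vlt r hmet hM) -leqNgt (leq_trans hij hyj).
move: hyz => /and3P[_ _ /orP[eT|/andP[hy' _]]]; last by rewrite hy' in yi.
set e := [set y; z] in eT.
have eE : e \in Ej.
  rewrite inE eT /=; apply/existsP; exists y; rewrite set21 /=.
  move: hy; rewrite leq_eqVlt ltnS => /orP[->|h]; first by rewrite orbT.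
  by rewrite eqn_leq h hyj.
have pes : ep e \in es by apply: map_f; rewrite mem_enum.
have [t0 t0in /andP[p1t p2t]] := hasP (same _ pes).
have [ee _] := ep_spec (T_edge eT).
have yt0 : y \in t0.
  have : y \in e by rewrite set21.
  by rewrite {1}ee => /set2P[->|->].
have zt0 : z \in t0.
  have : z \in e by rewrite set22.
  by rewrite {1}ee => /set2P[->|->].
move=> t tin yt; have <- := tour_uniq (cov y) t0in tin yt0 yt.
case: (leqP (lv z) j.+1) => hz.
  exact: hPz hz t0 t0in zt0.
move=> x xt kx; apply: pz_conn t0in _ xt kx.
by apply/hasP; exists z.
Qed.

Lemma Gj_edges ts e : e \in Fl (allprs ts) -> is_edge e && (e \subset V_le d r M j).
Proof.
rewrite inE => /andP[he /hasP[p pin /eqP E]]; subst e.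
rewrite he /=; case/flattenP: pin => s /mapP[t tin ->] pin.
have [k1 k2] := prs_K pin; rewrite /Kj in k1 k2.
by apply/subsetP => w /set2P[->|->]; rewrite (in_Vle r hmet hM).
Qed.

Lemma level_bound (H : {set {set V}}) : is_mst d (V_le d r M j) (V_lt d r M j) H ->
  wF d H <= 2%:R * wF d Ej.
Proof.
move=> hH; have [ts [cov same cost]] := tours hmet es.
apply: le_trans (mst_le hmet hH (Gj_edges (ts := ts)) _) _.
  move=> x y xin yin; rewrite !(in_Vle r hmet hM) in xin yin.
  apply: connect_trans (Ej_conn cov same xin) _.
  by rewrite /Gj connect_symm; exact: (Ej_conn cov same yin).
apply: le_trans (wF_Fl _) _.
rewrite wF_Ej; apply: le_trans cost.
rewrite /allprs big_flatten big_map; apply: ler_sum => t _.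
exact: prs_cost.
Qed.

End Fj.


Lemma cnt_eq m n c : (\sum_(m <= j < n) (c == j) = ((m <= c) && (c < n)))%N.
Proof.
elim: n => [|n IH]; first by rewrite big_geq // ltn0 andbF.
case: (leqP m n) => mn.
  rewrite big_nat_recr //= IH ltnS.
  case: (ltngtP c n) => h.
  - by rewrite andbT addn0.
  - by rewrite andbF.
  - by rewrite andbF andbT h mn.
rewrite big_geq // ltnS; case: (leqP m c) => //= mc.
by rewrite leqNgt (leq_trans mn mc).
Qed.

Lemma cnt_le1 m n c : (\sum_(m <= j < n) (c == j) <= 1)%N.
Proof. by rewrite cnt_eq; case: (_ && _). Qed.

Lemma cnt_le1S m n c : (\sum_(m <= j < n) (c == j.+1) <= 1)%N.
Proof.
apply: leq_trans (cnt_le1 m n c.-1); apply: leq_sum => j _.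
by case: c => [|c] //=; rewrite eqSS.
Qed.

Section Final.
Variables (R : archiRealFieldType) (V : finType) (d : V -> V -> R) (r : V) (M : R).
Hypothesis hmet : is_metric d.
Hypothesis hM : 0 < M.
Local Notation lv := (lvl r hmet hM).

Lemma Pj_cnt (a b : V) m n :
  (\sum_(m <= j < n) [exists x in [set a; b], (lv x == j) || (lv x == j.+1)] <= 4)%N.
Proof.
apply: (@leq_trans (\sum_(m <= j < n) ((lv a == j) + (lv a == j.+1) + (lv b == j) + (lv b == j.+1)))%N).
  apply: leq_sum => j _.
  case: existsP => [[x /andP[/set2P[->|->] h]]|_] //.
    by case/orP: h => ->; rewrite ?addnA //= ?addn1 ?add1n.
  by case/orP: h => ->; rewrite ?addnA ?addn1 // addnC.
rewrite !big_split /=.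
have h1 := cnt_le1 m n (lv a); have h2 := cnt_le1S m n (lv a).
have h3 := cnt_le1 m n (lv b); have h4 := cnt_le1S m n (lv b).
by rewrite -[4%N]/(1 + 1 + 1 + 1)%N !leq_add.
Qed.


Lemma partb (H : nat -> {set {set V}}) :
  (forall i, is_mst d (V_le d r M i) (V_lt d r M i) (H i)) ->
  forall (i : nat) (T : {set {set V}}), is_st [set: V] (V_lt d r M i) T ->
     forall n : nat, \sum_(i <= j < n) wF d (H j) <= 8%:R * wF d T.
Proof.
move=> hH i T hT n.
apply: (@le_trans _ _ (\sum_(i <= j < n) 2%:R * wF d (Ej r hmet hM j T))).
  apply: ler_sum_nat => j /andP[ij _]; exact: (level_bound hmet hM hT ij (hH j)).
set P := fun j (e : {set V}) => [exists x in e, (lv x == j) || (lv x == j.+1)].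
have E j : wF d (Ej r hmet hM j T) = \sum_(e in T) edge_w d e * (P j e)%:R.
  rewrite /wF /Ej.
  rewrite (eq_bigl (fun e => (e \in T) && P j e)); last by move=> e; rewrite inE.
  rewrite big_mkcondr /=; apply: eq_bigr => e _.
  by case: (P j e); rewrite ?mulr1 ?mulr0.
under eq_bigr do rewrite E.
rewrite -mulr_sumr exchange_big /= /wF mulr_sumr.
have -> : (8%:R : R) = 2%:R * 4%:R by rewrite -natrM.
rewrite mulr_sumr; apply: ler_sum => e eT.
rewrite -mulrA ler_wpM2l ?ler0n //.
rewrite -mulr_sumr [X in _ <= X]mulrC ler_wpM2l ?edge_w_ge0 //.
rewrite -natr_sum ler_nat.
have /cards2P [a [b [_ ->]]] := T_edge hT eT.
exact: Pj_cnt.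
Qed.

End Final.

Theorem theorem2 (R : archiRealFieldType) (V : finType) (d : V -> V -> R) (r : V) (M : R)
    (H : nat -> {set {set V}}) :
  is_metric d -> 0 < M ->
  (forall i, is_mst d (V_le d r M i) (V_lt d r M i) (H i)) ->
  (* (a) *)
  (is_st [set: V] set0 (Hunion H) /\
   forall (p : seq V),
     path (fun x y => [set x; y] \in Hunion H) r p -> uniq (r :: p) ->
     is_leaf (Hunion H) (last r p) ->
     levels_nondecr d r M (r :: p))
  /\
  (* (b) *)
  (forall (i : nat) (T : {set {set V}}), is_st [set: V] (V_lt d r M i) T ->
     forall n : nat, \sum_(i <= j < n) wF d (H j) <= 8%:R * wF d T).
Proof.
move=> hmet hM hH; split.
  split; first exact: (Hun_st hmet hM hH).
  by move=> p hp hu _; exact: (Hun_mono hmet hM hH hp hu).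
exact: (partb hmet hM hH).
Qed.
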